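(* Let $G=(K\cup I,E)$ be a split graph and $(V,\mathcal{F})$ the split graph vertex shelling antimatroid defined on $G$. Let $u,v$ be distinct elements of $V$. Then $V\setminus\{u,v\}\in\mathcal{F}$ if and only if $u\sim v$, or at least one of $u,v$ is isolated in $G$.
   Context: A split graph $G=(K\cup I,E)$ is a finite simple graph whose vertex set $V=K\cup I$ comes with a fixed partition into a clique $K$ and an independent set $I$. We write $u\sim v$ if $u,v$ are adjacent; a vertex is isolated if it has no neighbours. A vertex is simplicial if its neighbours induce a clique. The split graph vertex shelling antimatroid of $G$ is $(V,\mathcal{F})$ where $F\subseteq V$ is feasible iff there is an ordering $f_1,\dots,f_{|F|}$ of $F$ such that each $f_j$ is simplicial in $G$ minus $\{f_1,\dots,f_{j-1}\}$ (the empty set is feasible). *)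

(* Defs.v *)
From mathcomp Require Import all_boot.
Set Implicit Arguments. Unset Strict Implicit. Unset Printing Implicit Defensive.

Definition simple_graph (T : finType) (e : rel T) : Prop :=
  symmetric e /\ irreflexive e.

Definition split_partition (T : finType) (e : rel T) (K : {set T}) : Prop :=
  (forall x y, x \in K -> y \in K -> x != y -> e x y) /\
  (forall x y, x \in ~: K -> y \in ~: K -> ~~ e x y).

Definition isolated (T : finType) (e : rel T) (v : T) : bool :=
  [forall x, ~~ e v x].

Definition simplicial_in (T : finType) (e : rel T) (R : {set T}) (v : T) : bool :=
  [forall x in R, forall y in R, [&& e v x, e v y & x != y] ==> e x y].

Fixpoint shelling_seq (T : finType) (e : rel T) (R : {set T}) (s : seq T) : bool :=
  match s with
  | [::] => true
  | x :: s' => [&& x \in R, simplicial_in e R x & shelling_seq e (R :\ x) s']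
  end.

Definition shelling_feasible (T : finType) (e : rel T) (F : {set T}) : Prop :=
  exists s : seq T, [set x in s] = F /\ shelling_seq e [set: T] s.

(* Main.v *)
Require Import Defs.
From mathcomp Require Import all_boot.

Section S.
Variables (T : finType) (e : rel T).

Lemma simpl_use (R : {set T}) w x y : simplicial_in e R w -> x \in R -> y \in R ->
  e w x -> e w y -> x != y -> e x y.
Proof.
move=> /forallP H xR yR ex ey nxy.
have := H x; rewrite xR /= => /forallP /(_ y); rewrite yR /=.
by rewrite ex ey nxy.
Qed.

Lemma simpl_mk (R : {set T}) w : (forall x y, x \in R -> y \in R ->
  e w x -> e w y -> x != y -> e x y) -> simplicial_in e R w.
Proof.
move=> H; apply/forallP => x; apply/implyP => xR; apply/forallP => y.
apply/implyP => yR; apply/implyP => /and3P [a b c]; exact: H.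
Qed.

Lemma first_in (P : pred T) (R : {set T}) s : shelling_seq e R s -> has P s ->
  exists w (R' : {set T}), [/\ P w, w \in R', simplicial_in e R' w &
     forall z, z \in R -> (P z || (z \notin s)) -> z \in R'].
Proof.
elim: s R => [|a s IH] R //= /and3P [aR sa sh].
case Pa: (P a) => /= hs; first by exists a, R; split.
have [w [R' [Pw wR' sw HR']]] := IH _ sh hs.
exists w, R'; split => // z zR /orP [Pz|nz].
  apply: HR'; last by rewrite Pz.
  rewrite !inE zR andbT; apply/eqP => za.
  by move: Pa; rewrite -za Pz.
apply: HR'; first by move: nz; rewrite !inE zR negb_or => /andP [-> _].
by move: nz; rewrite inE negb_or => /andP [_ ->]; rewrite orbT.
Qed.
End S.
Arguments simpl_use {T e R w x y}.
Arguments simpl_mk {T e R w}.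

Theorem mainTheorem4 (T : finType) (e : rel T) (K : {set T})
  (Hg : simple_graph e) (Hsplit : split_partition e K) (u v : T) (Huv : u != v) :
  shelling_feasible e (setT :\ u :\ v) <->
  (e u v \/ isolated e u \/ isolated e v).
Proof.
case: Hg => Hsym Hirr; case: Hsplit => Hcl Hind.
have Hind' : forall x y, x \notin K -> y \notin K -> e x y = false.
  move=> x y xK yK; apply/negbTE; apply: Hind; by rewrite inE.
have neq_of : forall x y, e x y -> x != y.
  by move=> x y exy; apply/eqP => ex; move: exy; rewrite ex Hirr.
have noniso : forall x z, e x z -> ~~ isolated e x.
  by move=> x z exz; apply/forallP => /(_ z); rewrite exz.
split.
- move=> [s [Hs Hsh]].
  have inS : forall z, (z \in s) = (z != u) && (z != v).
    by move=> z; rewrite -[z \in s]in_set Hs !inE andbT andbC.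
  case: (boolP [|| e u v, isolated e u | isolated e v]) => [/or3P [h|h|h]|Hn];
    [by left|by right;left|by right;right|exfalso].
  have nuv : e u v = false by apply/negbTE; move: Hn; rewrite !negb_or => /and3P [].
  have [x ux] : exists x, e u x.
    move: Hn; rewrite !negb_or => /and3P [_ + _].
    by move=> /forallPn [x]; rewrite negbK => h; exists x.
  have [y vy] : exists y, e v y.
    move: Hn; rewrite !negb_or => /and3P [_ _ +].
    by move=> /forallPn [y]; rewrite negbK => h; exists y.
  have common : forall c, e u c -> e v c -> False.
    move=> c uc vc.
    have cs : c \in s.
      by rewrite inS; apply/andP; split; rewrite eq_sym; apply: neq_of.
    have hP : has (pred1 c) s by apply/hasP; exists c => //=.
    have [w [R' [Pw wR' sw HR']]] := @first_in _ _ (pred1 c) _ _ Hsh hP.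
    move/eqP: Pw => Pw; subst w.
    have uR : u \in R' by apply: HR'; rewrite ?inE // inS eqxx orbT.
    have vR : v \in R' by apply: HR'; rewrite ?inE // inS eqxx andbF orbT.
    have := simpl_use sw uR vR; rewrite !(Hsym c) uc vc Huv nuv.
    by move=> h; have := h isT isT isT.
  case uK: (u \in K); case vK: (v \in K).
  + by move: nuv; rewrite Hcl.
  + have yK : y \in K by case: (boolP (y \in K)) => // yK; move: vy; rewrite Hind' ?vK ?yK.
    have uy : u != y by apply/eqP => h; move: nuv; rewrite h Hsym vy.
    by apply: (common y) => //; apply: Hcl.
  + have xK : x \in K by case: (boolP (x \in K)) => // xK; move: ux; rewrite Hind' ?uK ?xK.
    have vx : v != x by apply/eqP => h; move: nuv; rewrite h ux.
    by apply: (common x) => //; apply: Hcl.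
  + have xK : x \in K by case: (boolP (x \in K)) => // xK; move: ux; rewrite Hind' ?uK ?xK.
    have yK : y \in K by case: (boolP (y \in K)) => // yK; move: vy; rewrite Hind' ?vK ?yK.
    have [xy|nxy] := eqVneq x y; first by subst y; apply: (common x).
    have xs : x \in s by rewrite inS; apply/andP; split; apply/eqP => h;
      move: xK; rewrite h ?uK ?vK.
    have hP : has [pred z | (z == x) || (z == y)] s by apply/hasP; exists x => //=; rewrite eqxx.
    have [w [R' [Pw wR' sw HR']]] := @first_in _ _ ([pred z | (z == x) || (z == y)]) _ _ Hsh hP.
    have xR : x \in R' by apply: HR'; rewrite ?inE // eqxx.
    have yR : y \in R' by apply: HR'; rewrite ?inE // eqxx orbT.
    have uR : u \in R' by apply: HR'; rewrite ?inE // inS eqxx orbT.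
    have vR : v \in R' by apply: HR'; rewrite ?inE // inS eqxx andbF orbT.
    case/orP: Pw => /eqP Pw; subst w.
    * have uy : e u y.
        apply: (simpl_use sw uR yR).
        - by rewrite Hsym.
        - by apply: Hcl.
        - by apply/eqP => h; move: yK; rewrite -h uK.
      exact: (common y).
    * have vx : e v x.
        apply: (simpl_use sw vR xR).
        - by rewrite Hsym.
        - by apply: Hcl; rewrite // eq_sym.
        - by apply/eqP => h; move: xK; rewrite -h vK.
      by apply: (common x) => //; rewrite Hsym.
- move=> Hr.
  have Hyp : forall x y, ((x == u) && (y == v)) || ((x == v) && (y == u)) ->
      (exists a, e x a) -> (exists b, e y b) -> e x y.
    move=> x y /orP [] /andP [/eqP -> /eqP ->] [a ea] [b eb].
    + case: Hr => [//|[h|h]]; first by move: (noniso _ _ ea); rewrite h.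
      by move: (noniso _ _ eb); rewrite h.
    + rewrite Hsym; case: Hr => [//|[h|h]]; first by move: (noniso _ _ eb); rewrite h.
      by move: (noniso _ _ ea); rewrite h.
  have local : forall (R : {set T}) w0, w0 \in R :\ u :\ v -> u \in R -> v \in R ->
      exists2 w, w \in R :\ u :\ v & simplicial_in e R w.
    move=> R w0 w0A uR vR.
    case: (pickP [pred w | (w \in R :\ u :\ v) && (w \notin K)]) => [w /andP [wA wK]|noI].
      exists w => //; apply: simpl_mk => x y _ _ ex ey nxy.
      have xK : x \in K by case: (boolP (x \in K)) => // xK; move: ex; rewrite Hind' ?wK ?xK.
      have yK : y \in K by case: (boolP (y \in K)) => // yK; move: ey; rewrite Hind' ?wK ?yK.
      exact: Hcl.
    have AK : forall z, z \in R :\ u :\ v -> z \in K.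
      by move=> z zA; move: (noI z) => /= /negbT; rewrite negb_and zA negbK.
    have out : forall z, z \in R -> z \notin K -> (z == u) || (z == v).
      move=> z zR zK; case: (boolP ((z == u) || (z == v))) => // h.
      move: zK; rewrite AK //.
      by rewrite !inE zR andbT; move: h; rewrite negb_or andbC.
    case: (pickP [pred w | (w \in R :\ u :\ v) &&
        [forall z, (z \in R) ==> e w z ==> (z \in K)]]) => [w /andP [wA /forallP H]|noJ].
      exists w => //; apply: simpl_mk => x y xR yR ex ey nxy.
      by apply: Hcl => //; [move: (H x) | move: (H y)]; rewrite ?xR ?yR ?ex ?ey.
    exists w0 => //; apply: simpl_mk.
    have mixed : forall x y, x \in R -> y \in R -> e w0 x -> e w0 y -> x != y ->
        x \notin K -> y \in K -> e x y.
      move=> x y xR yR ex ey nxy xK yK.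
      have xo := out x xR xK.
      case: (boolP ((y == u) || (y == v))) => yo.
        apply: Hyp; [|by exists w0; rewrite Hsym|by exists w0; rewrite Hsym].
        by case/orP: xo => /eqP ex'; case/orP: yo => /eqP ey'; subst;
          rewrite ?eqxx ?orbT //; move: nxy; rewrite eqxx.
      have yA : y \in R :\ u :\ v.
        by rewrite !inE yR andbT; move: yo; rewrite negb_or andbC.
      move: (noJ y) => /= /negbT; rewrite yA /= => /forallPn [z].
      rewrite !negb_imply => /and3P [zR eyz zK].
      have zo := out z zR zK.
      have [zx|nzx] := eqVneq z x; first by rewrite Hsym -zx.
      have : e x z.
        apply: Hyp; [|by exists w0; rewrite Hsym|by exists y; rewrite Hsym].
        by case/orP: xo => /eqP ex'; case/orP: zo => /eqP ez'; subst;
          rewrite ?eqxx ?orbT //; move: nzx; rewrite eqxx.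
      by rewrite Hind'.
    move=> x y xR yR ex ey nxy.
    case xK: (x \in K); case yK: (y \in K).
    + exact: Hcl.
    + by rewrite Hsym; apply: mixed => //; rewrite 1?eq_sym ?yK ?xK.
    + by apply: mixed => //; rewrite ?xK ?yK.
    + apply: Hyp; [|by exists w0; rewrite Hsym|by exists w0; rewrite Hsym].
      have xo := out x xR (negbT xK); have yo := out y yR (negbT yK).
      by case/orP: xo => /eqP ex'; case/orP: yo => /eqP ey'; subst;
        rewrite ?eqxx ?orbT //; move: nxy; rewrite eqxx.
  have main : forall n (R : {set T}), #|R| = n -> u \in R -> v \in R ->
      exists s, [set x in s] = R :\ u :\ v /\ shelling_seq e R s.
    elim=> [|n IH] R cR uR vR.
      by move: uR; rewrite (cards0_eq cR) inE.
    case: (set_0Vmem (R :\ u :\ v)) => [->|[w0 w0A]].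
      by exists [::]; split => //; apply/setP => z; rewrite !inE.
    have [w wA sw] := local R w0 w0A uR vR.
    have wR : w \in R by move: wA; rewrite !inE => /and3P [].
    have [s [Hs Hsh]] : exists s, [set x in s] = R :\ w :\ u :\ v /\ shelling_seq e (R :\ w) s.
      apply: IH; last 2 first.
      * by rewrite !inE uR andbT; move: wA; rewrite !inE => /and3P [_ /eqP h _];
          apply/eqP => h'; apply: h.
      * by rewrite !inE vR andbT; move: wA; rewrite !inE => /and3P [/eqP h _ _];
          apply/eqP => h'; apply: h.
      by move: cR; rewrite (cardsD1 w R) wR add1n => -[].
    exists (w :: s); split; last by rewrite /= wR sw.
    apply/setP => z; move/setP/(_ z): Hs; rewrite !inE => Hz.
    case: (eqVneq z w) => [->|nzw]; first by move: wA; rewrite !inE => /and3P [-> -> ->].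
    by rewrite /= Hz nzw.
  have [s [Hs Hsh]] := main _ [set: T] erefl (in_setT u) (in_setT v).
  by exists s.
Qed.
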